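(* Fix $n\ge1$ and $\mathbf a_n=(a_1,\dots,a_n)\in\mathcal A_n$. The function $F_{\mathbf a_n}:\bar\nabla\to\mathbb R$ is continuous on $\bar\nabla$ (with the subspace topology of $\mathbb R^\infty$) if and only if $a_1=0$.
   Context: $\bar\nabla=\{(p_1,p_2,\dots):p_1\ge p_2\ge\dots\ge0,\ \sum_k p_k\le1\}$ with the subspace topology of the product space $\mathbb R^\infty$. $\mathcal A_n=\{(a_1,\dots,a_n):a_k\in\mathbb Z_{\ge0},\ \sum_{i=1}^n ia_i=n\}$. For $\mathbf p\in\bar\nabla$, $$F_{\mathbf a_n}(\mathbf p)=C(n,\mathbf a_n)\sum\prod_{i=1}^n\prod_{j=1}^{a_i}p_{l_{ij}}^{\,i},\qquad C(n,\mathbf a_n)=\frac{n!}{\prod_{j=1}^n (j!)^{a_j}a_j!},$$ where the sum is over all families of positive integers $l_{ij}$ ($1\le i\le n$, $1\le j\le a_i$) that are pairwise distinct and satisfy $l_{i1}<\dots<l_{ia_i}$ for each $i$ (this is the probability of sample configuration $\mathbf a_n$ given allele frequencies $\mathbf p$, extended directly to $\bar\nabla$). *)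

(* Defs.v *)
From mathcomp Require Import all_boot all_order all_algebra.
From mathcomp Require Import all_classical all_reals all_analysis.
Set Implicit Arguments. Unset Strict Implicit. Unset Printing Implicit Defensive.
Import Order.TTheory GRing.Theory Num.Theory.
Import numFieldNormedType.Exports.
Local Open Scope classical_set_scope.
Local Open Scope ring_scope.

(* Conventions (0-based shifts):
   - a sample configuration a_n = (a_1,...,a_n) is  a : 'I_n -> nat,
     with  a k  standing for  a_{k+1};
   - a point p = (p_1, p_2, ...) of R^infty is  p : nat -> R,
     with  p k  standing for  p_{k+1}. *)

Definition in_An (n : nat) (a : 'I_n -> nat) : Prop :=
  (\sum_(k < n) k.+1 * a k)%N = n.

Definition nabla_bar (R : realType) : set (nat -> R) :=
  [set p | (forall k, p k.+1 <= p k) /\ (forall k, 0 <= p k) /\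
           (forall N, \sum_(k < N) p k <= 1)].

(* the list of exponents attached to the slots (i,j), 1<=i<=n, 1<=j<=a_i,
   listed block by block: a_1 copies of 1, then a_2 copies of 2, ... *)
Definition expo (n : nat) (a : 'I_n -> nat) : seq nat :=
  flatten [seq nseq (a k) k.+1 | k <- enum 'I_n].

(* admissible families (l_{ij}) : pairwise distinct indices, increasing
   within each block i (indices are 0-based: l stands for l_{ij} - 1) *)
Definition families (n : nat) (a : 'I_n -> nat) : set (seq nat) :=
  [set l | size l = size (expo a) /\ uniq l /\
     (forall k, k.+1 < size l -> nth 0 (expo a) k = nth 0 (expo a) k.+1 ->
        nth 0 l k < nth 0 l k.+1)%N].

Definition Ccoef (n : nat) (a : 'I_n -> nat) (R : realType) : R :=
  (n`!)%:R / (\prod_(k < n) ((k.+1)`! ^ a k * (a k)`!))%N%:R.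

Definition term (n : nat) (a : 'I_n -> nat) (R : realType) (p : nat -> R)
  (l : seq nat) : R :=
  \prod_(k < size l) p (nth 0 l k) ^+ nth 0 (expo a) k.

(* F_{a_n}(p); the sum of non-negative terms is finite on nabla_bar. *)
Definition F (n : nat) (a : 'I_n -> nat) (R : realType)
  (p : {ptws nat -> R}) : R :=
  Ccoef a R * fine (\esum_(l in families a) (term a p l)%:E).

(* Main.v *)
Require Import Defs.
From mathcomp Require Import all_boot all_order all_algebra.
From mathcomp Require Import all_classical all_reals all_analysis.
From mathcomp Require Import finmap.
From mathcomp Require Import zify.
From mathcomp Require Import lra.
Import Order.TTheory GRing.Theory Num.Theory.
Import numFieldNormedType.Exports.
Local Open Scope classical_set_scope.
Local Open Scope ring_scope.


Section Lists.
Variable L : nat.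
Definition lst {M} (f : {ffun 'I_L -> 'I_M}) : seq nat := [seq val (f i) | i <- enum 'I_L].
Lemma size_lst M (f : {ffun 'I_L -> 'I_M}) : size (lst f) = L.
Proof. by rewrite size_map size_enum_ord. Qed.
Lemma nth_lst M (f : {ffun 'I_L -> 'I_M}) (i : 'I_L) : nth 0%N (lst f) i = f i.
Proof. by rewrite (nth_map i) ?size_enum_ord // nth_ord_enum. Qed.
Lemma lst_inj M : injective (@lst M).
Proof. move=> f g e; apply/ffunP => i; apply/val_inj; by rewrite /= -!nth_lst e. Qed.
Definition LS M := [seq lst f | f <- enum {ffun 'I_L -> 'I_M.+1}].
Lemma LS_uniq M : uniq (LS M).
Proof. rewrite map_inj_uniq ?enum_uniq //; exact: lst_inj. Qed.
Lemma mem_LS M l : (l \in LS M) = (size l == L) && all (fun x => x <= M)%N l.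
Proof.
apply/idP/idP.
- case/mapP => f _ ->; rewrite size_lst eqxx /=; apply/allP => x /mapP [i _ ->].
  rewrite -ltnS; exact: ltn_ord.
- case/andP => /eqP sl /allP al.
  have -> : l = lst [ffun i : 'I_L => (inord (nth 0%N l i) : 'I_M.+1)].
    apply: (@eq_from_nth _ 0%N); first by rewrite size_lst.
    move=> k; rewrite sl => kL.
    have := nth_lst _ [ffun i : 'I_L => (inord (nth 0%N l i) : 'I_M.+1)] (Ordinal kL).
    rewrite /= => ->; rewrite ffunE inordK //= ltnS; apply: al; apply: mem_nth; by rewrite sl.
  by apply: map_f; rewrite mem_enum.
Qed.
Lemma big_LS (R : Type) (idx : R) (op : Monoid.com_law idx) M (P : pred (seq nat)) (g : seq nat -> R) :
  \big[op/idx]_(l <- LS M | P l) g l = \big[op/idx]_(f : {ffun 'I_L -> 'I_M.+1} | P (lst f)) g (lst f).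
Proof. by rewrite big_map big_enum_cond. Qed.
End Lists.
Arguments lst {L M}.

Lemma sum_sub (R : numDomainType) (T : eqType) (s1 s2 : seq T) (f : T -> R) :
  uniq s1 -> uniq s2 -> {subset s1 <= s2} -> (forall x, x \in s2 -> 0 <= f x) ->
  \sum_(x <- s1) f x <= \sum_(x <- s2) f x.
Proof.
move=> u1 u2 sub f0.
rewrite [X in _ <= X](bigID (fun x => x \in s1)) /=.
have -> : \sum_(x <- s2 | x \in s1) f x = \sum_(x <- s1) f x.
  rewrite -big_filter; apply: perm_big; apply: uniq_perm; rewrite ?filter_uniq //.
  move=> x; rewrite mem_filter; apply/andP/idP => [[]//|h]; split => //; exact: sub.
rewrite lerDl big_seq_cond; apply: sumr_ge0 => x /andP [h _]; exact: f0.
Qed.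

Section Main.
Context {R : realType}.
Context {n : nat} {a : 'I_n -> nat}.
Local Notation E := (expo a).
Local Notation L := (size (expo a)).

Lemma esum_lb (S : set (seq nat)) (g : seq nat -> R) (s : seq (seq nat)) :
  uniq s -> (forall x, x \in s -> S x) -> (forall x, S x -> 0 <= g x) ->
  ((\sum_(x <- s) g x)%:E <= \esum_(x in S) (g x)%:E)%E.
Proof.
move=> us sS g0; apply: esum_ge; exists [set` s].
  split; [exact: finite_seq | by move=> x /= xs; apply: sS].
by rewrite -fsbig_seq // sumEFin.
Qed.

Lemma esum_ub (S : set (seq nat)) (g : seq nat -> R) (B : R) :
  (forall x, S x -> size x = L) -> (forall x, S x -> 0 <= g x) ->
  (forall M, \sum_(l <- LS L M | `[< S l >]) g l <= B) ->
  (\esum_(x in S) (g x)%:E <= B%:E)%E.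
Proof.
move=> sS g0 hB; apply: ge_ereal_sup => _ [X [finX XS] <-].
rewrite fsbig_finite // sumEFin lee_fin.
set s := (fset_set X : seq _).
pose M := (\max_(x <- s) \max_(y <- x) y)%N.
apply: le_trans (hB M).
rewrite -[X in _ <= X]big_filter.
apply: sum_sub.
- exact: fset_uniq.
- exact/filter_uniq/LS_uniq.
- move=> x xs; have Xx : X x by move: xs; rewrite in_fset_set // => /set_mem.
  rewrite mem_filter asboolT; last exact: XS.
  rewrite /= mem_LS sS; last exact: XS.
  rewrite eqxx /=.
  apply/allP => y yx.
  apply: (leq_trans (@leq_bigmax_seq _ x xpredT id y yx isT)).
  exact: (@leq_bigmax_seq _ s xpredT (fun x => \max_(y <- x) y)%N x xs isT).
- by move=> x; rewrite mem_filter => /andP [/asboolP Sx _]; exact: g0.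
Qed.

Lemma nb_ge0 (q : nat -> R) : nabla_bar q -> forall k, 0 <= q k.
Proof. by case=> _ []. Qed.

Lemma nb_mono (q : nat -> R) : nabla_bar q -> forall j k, (j <= k)%N -> q k <= q j.
Proof.
move=> [d _] j k jk; elim: k jk => [|k IH]; first by rewrite leqn0 => /eqP ->.
rewrite leq_eqVlt ltnS => /orP[/eqP -> // | /IH h]; exact: le_trans (d k) h.
Qed.

Lemma nb_le1 (q : nat -> R) : nabla_bar q -> forall k, q k <= 1.
Proof.
move=> [_ [h0 hs]] k; apply: le_trans (hs k.+1); rewrite big_ord_recr /= lerDr.
by apply: sumr_ge0 => i _; exact: h0.
Qed.

Lemma nb_small (q : nat -> R) : nabla_bar q -> forall N, N.+1%:R * q N <= 1.
Proof.
move=> hq N; have [d [h0 hs]] := hq; apply: le_trans (hs N.+1).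
have -> : N.+1%:R * q N = \sum_(i < N.+1) q N by rewrite sumr_const card_ord mulr_natl.
apply: ler_sum => i _; apply: nb_mono => //; rewrite -ltnS; exact: ltn_ord.
Qed.

Lemma expo_pos k : k \in E -> (0 < k)%N.
Proof. by case/flattenP => s /mapP [j _ ->] /nseqP [-> _]. Qed.

Lemma expo_ge2 (hn : (0 < n)%N) : a (Ordinal hn) = 0%N -> forall k, k \in E -> (2 <= k)%N.
Proof.
move=> a0 k /flattenP [s /mapP [j _ ->]] /nseqP [-> hj].
case: j hj => [[|j] jn] //= hj.
have : a (Ordinal jn) = a (Ordinal hn) by congr (a _); apply: val_inj.
by move=> e; rewrite e a0 in hj.
Qed.

Lemma term_lst M (q : nat -> R) (f : {ffun 'I_L -> 'I_M}) :
  term a q (lst f) = \prod_(k < L) q (f k) ^+ nth 0%N E k.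
Proof.
rewrite /term -(big_mkord xpredT (fun k => q (nth 0%N (lst f) k) ^+ nth 0%N E k)).
rewrite size_lst big_mkord.
by apply: eq_bigr => k _; rewrite nth_lst.
Qed.

Lemma term_ge0 (q : nat -> R) l : nabla_bar q -> 0 <= term a q l.
Proof. move=> hq; apply: prodr_ge0 => k _; apply: exprn_ge0; exact: nb_ge0. Qed.

Lemma term_le_prod M (q : nat -> R) (f : {ffun 'I_L -> 'I_M}) : nabla_bar q ->
  term a q (lst f) <= \prod_(k < L) q (f k).
Proof.
move=> hq; rewrite term_lst; apply: ler_prod => k _.
rewrite exprn_ge0 ?(nb_ge0 hq) //=.
have : (0 < nth 0%N E k)%N by apply: expo_pos; apply: mem_nth.
case: (nth 0%N E k) => // e _; rewrite exprS; apply: ler_piMr; first exact: nb_ge0.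
apply: exprn_ile1; [exact: nb_ge0 | exact: nb_le1].
exact: nb_ge0.
Qed.

Lemma sum_prod_le1 M (q : nat -> R) : nabla_bar q ->
  \sum_(f : {ffun 'I_L -> 'I_M.+1}) \prod_(k < L) q (f k) <= 1.
Proof.
move=> hq; rewrite -(bigA_distr_bigA (fun (k : 'I_L) (j : 'I_M.+1) => q j)) /=.
rewrite prodr_const card_ord; apply: exprn_ile1.
  by apply: sumr_ge0 => i _; exact: nb_ge0.
by have [_ [_ ]] := hq; apply.
Qed.

Definition G M (q : nat -> R) := \sum_(l <- LS L M | `[< families a l >]) term a q l.

Lemma G_le1 M (q : nat -> R) : nabla_bar q -> G M q <= 1.
Proof.
move=> hq; rewrite /G big_LS; apply: (le_trans _ (@sum_prod_le1 M q hq)).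
rewrite big_mkcond /=; apply: ler_sum => f _; case: ifP => _.
  exact: term_le_prod.
by apply: prodr_ge0 => k _; exact: nb_ge0.
Qed.

Definition En (q : nat -> R) := fine (\esum_(l in families a) (term a q l)%:E).

Lemma esum_le1 (q : nat -> R) : nabla_bar q -> (\esum_(l in families a) (term a q l)%:E <= 1%:E)%E.
Proof.
move=> hq; apply: esum_ub => //.
- by move=> x [].
- by move=> x _; exact: term_ge0.
- by move=> M; exact: G_le1.
Qed.

Lemma esum_En (q : nat -> R) : nabla_bar q -> \esum_(l in families a) (term a q l)%:E = (En q)%:E.
Proof.
move=> hq; rewrite /En fineK // ge0_fin_numE.
  exact: (le_lt_trans (@esum_le1 q hq) (ltry _)).
by apply: esum_ge0 => x _; rewrite lee_fin; exact: term_ge0.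
Qed.

Lemma En_lb (q : nat -> R) M : nabla_bar q -> G M q <= En q.
Proof.
move=> hq; rewrite -lee_fin -esum_En // /G -big_filter.
apply: esum_lb.
- exact/filter_uniq/LS_uniq.
- by move=> x; rewrite mem_filter => /andP [/asboolP].
- by move=> x _; exact: term_ge0.
Qed.

Lemma En_ub (q : nat -> R) B : nabla_bar q -> (forall M, G M q <= B) -> En q <= B.
Proof.
move=> hq hB; rewrite -lee_fin -esum_En //; apply: esum_ub => //.
- by move=> x [].
- by move=> x _; exact: term_ge0.
Qed.

End Main.
Arguments G {R n} a M q.
Arguments En {R n} a q.
Arguments nb_ge0 {R q}.
Arguments nb_mono {R q}.
Arguments nb_le1 {R q}.
Arguments nb_small {R q}.
Arguments term_ge0 {R n a q l}.
Arguments term_le_prod {R n a M q f}.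
Arguments sum_prod_le1 {R n a} M {q}.
Arguments G_le1 {R n a} M {q}.
Arguments esum_le1 {R n a q}.
Arguments esum_En {R n a q}.
Arguments En_lb {R n a q} M.
Arguments En_ub {R n a q} B.

Section Tail.
Context {R : realType}.
Context {n : nat} {a : 'I_n -> nat}.
Local Notation E := (expo a).
Local Notation L := (size (expo a)).

Lemma pow_le1 (x : R) e : 0 <= x -> x <= 1 -> (0 < e)%N -> x ^+ e <= x.
Proof.
move=> x0 x1; case: e => // e _; rewrite exprS; apply: ler_piMr => //.
exact: exprn_ile1.
Qed.

Lemma tail (q : nat -> R) (hq : nabla_bar q) (h2 : forall k, k \in E -> (2 <= k)%N) M N :
  \sum_(l <- LS L M | `[< families a l >] && ~~ all (fun x => x <= N)%N l) term a q l
   <= L%:R * q N.+1.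
Proof.
have q0 := nb_ge0 hq; have q1 := nb_le1 hq.
rewrite big_LS.
apply: (@le_trans _ _ (\sum_(f : {ffun 'I_L -> 'I_M.+1}) \sum_(k < L)
   (if (N < f k)%N then q N.+1 * \prod_(j < L) q (f j) else 0))).
  rewrite big_mkcond /=; apply: ler_sum => f _; case: ifP => [/andP [_ hall] | _]; last first.
    apply: sumr_ge0 => k _; case: ifP => // _; apply: mulr_ge0 => //.
    by apply: prodr_ge0 => j _.
  move/allPn: hall => [x /mapP [k _ ->]]; rewrite -ltnNge => hk.
  rewrite (bigD1 k) //= hk.
  apply: (@le_trans _ _ (q N.+1 * \prod_(j < L) q (f j))); last first.
    rewrite lerDl; apply: sumr_ge0 => j _; case: ifP => // _; apply: mulr_ge0 => //.
    by apply: prodr_ge0 => i _.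
  rewrite term_lst (bigD1 k) //= [X in _ <= _ * X](bigD1 k) //= mulrA.
  apply: ler_pM.
  - exact: exprn_ge0.
  - by apply: prodr_ge0 => j _; exact: exprn_ge0.
  - have he : (2 <= nth 0%N E k)%N by apply: h2; apply: mem_nth.
    rewrite -(subnKC he) exprD expr2.
    apply: (@le_trans _ _ (q (f k) * q (f k))).
      by apply: ler_piMr; [exact: mulr_ge0 | exact: exprn_ile1].
    apply: ler_wpM2r => //; apply: nb_mono => //.
  - apply: ler_prod => j _; rewrite exprn_ge0 //=; apply: pow_le1 => //.
    by apply: expo_pos; apply: mem_nth.
rewrite exchange_big /=.
apply: (@le_trans _ _ (\sum_(k < L) q N.+1)); last first.
  by rewrite sumr_const card_ord mulr_natl.
apply: ler_sum => k _.
apply: (@le_trans _ _ (\sum_(f : {ffun 'I_L -> 'I_M.+1}) q N.+1 * \prod_(j < L) q (f j))).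
  apply: ler_sum => f _; case: ifP => // _; apply: mulr_ge0 => //.
  by apply: prodr_ge0 => i _.
rewrite -mulr_sumr; apply: ler_piMr => //; exact: sum_prod_le1.
Qed.

Lemma G_split (q : nat -> R) (hq : nabla_bar q) (h2 : forall k, k \in E -> (2 <= k)%N) M N :
  G a M q <= G a N q + L%:R * q N.+1.
Proof.
rewrite /G (bigID (fun l => all (fun x => x <= N)%N l)) /=.
apply: lerD; last exact: tail.
rewrite -big_filter -[X in _ <= X]big_filter; apply: sum_sub.
- exact/filter_uniq/LS_uniq.
- exact/filter_uniq/LS_uniq.
- move=> l; rewrite !mem_filter => /andP [/andP [fl al] lM]; rewrite fl /=.
  by move: lM; rewrite !mem_LS al => /andP [-> _].
- by move=> x _; exact: term_ge0.
Qed.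

Lemma cvg_bigsum (T : Type) (F : set_system T) (FF : Filter F) (I : Type) (s : seq I)
  (P : pred I) (h : I -> T -> R) (c : I -> R) :
  (forall i, P i -> h i @ F --> c i) ->
  (fun t => \sum_(i <- s | P i) h i t) @ F --> \sum_(i <- s | P i) c i.
Proof.
move=> hc; elim: s => [|x s IH].
  have -> : (fun t => \sum_(i <- [::] | P i) h i t) = (fun=> 0) by apply: funext => t; rewrite big_nil.
  rewrite big_nil; exact: cvg_cst.
rewrite big_cons; case Px: (P x).
  have -> : (fun t => \sum_(i <- x :: s | P i) h i t) = (fun t => h x t + \sum_(i <- s | P i) h i t).
    by apply: funext => t; rewrite big_cons Px.
  by apply: cvgD => //; exact: hc.
have -> : (fun t => \sum_(i <- x :: s | P i) h i t) = (fun t => \sum_(i <- s | P i) h i t).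
  by apply: funext => t; rewrite big_cons Px.
exact: IH.
Qed.

Lemma cvg_bigprod (T : Type) (F : set_system T) (FF : Filter F) (I : Type) (s : seq I)
  (P : pred I) (h : I -> T -> R) (c : I -> R) :
  (forall i, P i -> h i @ F --> c i) ->
  (fun t => \prod_(i <- s | P i) h i t) @ F --> \prod_(i <- s | P i) c i.
Proof.
move=> hc; elim: s => [|x s IH].
  have -> : (fun t => \prod_(i <- [::] | P i) h i t) = (fun=> 1) by apply: funext => t; rewrite big_nil.
  rewrite big_nil; exact: cvg_cst.
rewrite big_cons; case Px: (P x).
  have -> : (fun t => \prod_(i <- x :: s | P i) h i t) = (fun t => h x t * \prod_(i <- s | P i) h i t).
    by apply: funext => t; rewrite big_cons Px.
  by apply: cvgM => //; exact: hc.
have -> : (fun t => \prod_(i <- x :: s | P i) h i t) = (fun t => \prod_(i <- s | P i) h i t).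
  by apply: funext => t; rewrite big_cons Px.
exact: IH.
Qed.

Lemma cvg_pow (T : Type) (F : set_system T) (FF : Filter F) (h : T -> R) (c : R) e :
  h @ F --> c -> (fun t => h t ^+ e) @ F --> c ^+ e.
Proof.
move=> hc; elim: e => [|e IH].
  have -> : (fun t => h t ^+ 0) = (fun=> 1) by apply: funext => t; rewrite expr0.
  rewrite expr0; exact: cvg_cst.
have -> : (fun t => h t ^+ e.+1) = (fun t => h t * h t ^+ e).
  by apply: funext => t; rewrite exprS.
by rewrite exprS; apply: cvgM.
Qed.

Lemma proj_cvg (p : {ptws nat -> R}) i :
  (fun q : {ptws nat -> R} => q i) @ nbhs p --> p i.
Proof.
have : {ptws, nbhs p --> p} by exact: cvg_id.
by move/(pointwise_cvgP _) => /(_ i).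
Qed.

Lemma G_cont M (p : {ptws nat -> R}) :
  (fun q : {ptws nat -> R} => G a M q) @ nbhs p --> G a M p.
Proof.
apply: (@cvg_bigsum _ (nbhs p) (nbhs_filter p) _ _ _ (fun l (q : {ptws nat -> R}) => term a q l)) => l _.
rewrite /term; apply: (@cvg_bigprod _ (nbhs p) (nbhs_filter p) _ _ _ (fun (k : 'I_(size l)) (q : {ptws nat -> R}) => q (nth 0%N l k) ^+ nth 0%N E k)) => k _.
apply: cvg_pow; exact: proj_cvg.
Qed.

End Tail.

Section Back.
Context {R : realType}.
Context {n : nat} {a : 'I_n -> nat}.
Local Notation E := (expo a).
Local Notation L := (size (expo a)).

Lemma back_dir (h2 : forall k, k \in E -> (2 <= k)%N) :
  {within (@nabla_bar R : set {ptws nat -> R}), continuous (@F n a R)}.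
Proof.
apply/subspace_continuousP => p Ap.
suff hE : En a @ within (@nabla_bar R : set {ptws nat -> R}) (nbhs p) --> En a p.
  have -> : @F n a R = (fun q => Ccoef a R * En a q) by [].
  by apply: cvgM => //; exact: cvg_cst.
apply/cvgrPdist_lt => e e0.
have e20 : 0 < e / 2 by rewrite divr_gt0.
pose N := Num.Def.archi_bound (2 * L%:R / e).
have hN : 2 * L%:R < e * N.+2%:R.
  have hb : 2 * L%:R / e < N%:R.
    by apply: archi_boundP; apply: divr_ge0 => //; exact: ltW.
  rewrite ltr_pdivrMr // [_ * e]mulrC in hb.
  apply: (lt_le_trans hb); apply: ler_wpM2l; first exact: ltW.
  by rewrite ler_nat; exact: (leq_trans (leqnSn N) (leqnSn _)).
have tail_small : forall q : nat -> R, nabla_bar q -> L%:R * q N.+1 < e / 2.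
  move=> q hq; have := nb_small hq N.+1; have := nb_ge0 hq N.+1.
  have : (0 : R) <= L%:R by [].
  have : (0 : R) < N.+2%:R by rewrite ltr0n.
  move: (q N.+1) (L%:R : R) (N.+2%:R : R) hN => x Lr K hN' K0 L0 x0 Kx.
  nra.
have hG : \forall q \near nbhs p, `|G a N p - G a N q| < e / 2.
  by move/cvgrPdist_lt: (G_cont (a := a) N p); apply.
suff Hs : \forall q \near nbhs p, (nabla_bar q -> `|En a p - En a q| < e) by exact: Hs.
apply: (filterS _ hG); move=> q hq Aq.
have /andP [lp up] : G a N p <= En a p <= G a N p + L%:R * p N.+1.
  by rewrite (En_lb N Ap) /=; apply: (En_ub _ Ap) => M; exact: (G_split p Ap h2).
have /andP [lq uq] : G a N q <= En a q <= G a N q + L%:R * q N.+1.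
  by rewrite (En_lb N Aq) /=; apply: (En_ub _ Aq) => M; exact: (G_split q Aq h2).
have tp := tail_small p Ap; have tq := tail_small q Aq.
move: hq; rewrite !ltr_norml => /andP [h1 h2'].
apply/andP; split; lra.
Qed.

End Back.

Lemma expo_split (n : nat) (hn : (0 < n)%N) (a : 'I_n -> nat) :
  exists rest, expo a = nseq (a (Ordinal hn)) 1%N ++ rest /\
    forall x, x \in rest -> (2 <= x)%N.
Proof.
case: n hn a => [//|n'] hn a.
rewrite /expo enum_ordSl /=.
have -> : Ordinal hn = ord0 by apply: val_inj.
eexists; split; first reflexivity.
move=> x /flattenP [s /mapP [k /mapP [j _ ->] ->]] /nseqP [-> _] /=.
by rewrite /bump leq0n.
Qed.

Lemma expo_le (n : nat) (a : 'I_n -> nat) x : x \in expo a -> (x <= n)%N.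
Proof. by case/flattenP => s /mapP [j _ ->] /nseqP [-> _]; exact: ltn_ord. Qed.

Section LT.
Variables (r s K : nat) (t : {ffun 'I_r -> 'I_K}).
Definition lt1 := [seq (s + i * K + t i)%N | i : 'I_r <- enum 'I_r].
Definition ltl := lt1 ++ iota 0 s.
Lemma size_ltl : size ltl = (r + s)%N.
Proof. by rewrite size_cat size_map size_enum_ord size_iota. Qed.
Lemma nth_ltl1 k (hk : (k < r)%N) : nth 0%N ltl k = (s + k * K + t (Ordinal hk))%N.
Proof.
rewrite nth_cat size_map size_enum_ord hk (nth_map (Ordinal hk)) ?size_enum_ord //.
have -> // : nth (Ordinal hk) (enum 'I_r) k = Ordinal hk.
by apply: val_inj; rewrite /= nth_enum_ord.
Qed.
Lemma nth_ltl2 k : (r <= k)%N -> (k < r + s)%N -> nth 0%N ltl k = (k - r)%N.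
Proof.
move=> h1 h2; rewrite nth_cat size_map size_enum_ord ltnNge h1 /= nth_iota //; lia.
Qed.
Lemma g_mono i j (hi : (i < r)%N) (hj : (j < r)%N) : (i < j)%N ->
  (s + i * K + t (Ordinal hi) < s + j * K + t (Ordinal hj))%N.
Proof.
move=> ij; rewrite -!addnA ltn_add2l.
apply: (@leq_trans (i.+1 * K)); first by rewrite mulSnr ltn_add2l.
by apply: leq_trans (leq_addr _ _); rewrite leq_mul2r ij orbT.
Qed.
Lemma g_bound i (hi : (i < r)%N) : (s <= s + i * K + t (Ordinal hi) < s + r * K)%N.
Proof.
rewrite -addnA leq_addr /= ltn_add2l.
apply: (@leq_trans (i.+1 * K)); first by rewrite mulSnr ltn_add2l.
by rewrite leq_mul2r hi orbT.
Qed.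
Lemma g_mono' (i j : 'I_r) : (i < j)%N -> (s + i * K + t i < s + j * K + t j)%N.
Proof.
move=> ij; rewrite -!addnA ltn_add2l.
apply: (@leq_trans (i.+1 * K)); first by rewrite mulSnr ltn_add2l.
by apply: leq_trans (leq_addr _ _); rewrite leq_mul2r ij orbT.
Qed.
Lemma g_bound' (i : 'I_r) : (s <= s + i * K + t i < s + r * K)%N.
Proof.
rewrite -addnA leq_addr /= ltn_add2l.
apply: (@leq_trans (i.+1 * K)); first by rewrite mulSnr ltn_add2l.
by rewrite leq_mul2r ltn_ord orbT.
Qed.
Lemma ltl_uniq : uniq ltl.
Proof.
rewrite cat_uniq iota_uniq andbT; apply/andP; split.
  rewrite map_inj_uniq ?enum_uniq // => i j e.
  apply: val_inj; case: (ltngtP i j) => // h.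
  - by have := g_mono' _ _ h; rewrite e ltnn.
  - by have := g_mono' _ _ h; rewrite e ltnn.
apply/hasPn => x; rewrite mem_iota add0n /= => xs; apply/mapP => [[i _ e]].
by case/andP: (g_bound' i); rewrite -e leqNgt xs.
Qed.
End LT.

Lemma sum_trunc (R : realType) (f : nat -> R) T N : (forall k, 0 <= f k) ->
  (forall k, (T <= k)%N -> f k = 0) -> \sum_(k < N) f k <= \sum_(k < T) f k.
Proof.
move=> f0 fT; rewrite -!(big_mkord xpredT).
case: (leqP N T) => NT.
  rewrite (big_cat_nat (leq0n N) NT) /= lerDl.
  by rewrite big_seq_cond; apply: sumr_ge0 => k _.
rewrite (big_cat_nat (leq0n T) (ltnW NT)) /= [X in _ + X]big1_seq ?addr0 //.
by move=> k /andP [_]; rewrite mem_index_iota => /andP [h _]; exact: fT.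
Qed.

Section Fwd.
Context {R : realType} {n : nat} {a : 'I_n -> nat}.
Local Notation E := (expo a).
Local Notation L := (size (expo a)).
Variables (r s : nat).
Hypothesis hr : (0 < r)%N.
Hypothesis hrs : (r + s)%N = L.
Hypothesis HE1 : forall k, (k < r)%N -> nth 0%N E k = 1%N.
Hypothesis HE2 : forall k, (r <= k)%N -> (k < L)%N -> (2 <= nth 0%N E k)%N.

Definition xx : R := (2 * (s.+1)%:R)^-1.
Definition KK (m : nat) := (m + s.+1)%N.
Definition yy (m : nat) : R := (2 * (r * KK m)%:R)^-1.
Definition qq (m : nat) (k : nat) : R :=
  if (k < s)%N then xx else if (k < s + r * KK m)%N then yy m else 0.
Definition pp (k : nat) : R := if (k < s)%N then xx else 0.

Lemma rK_gt0 m : (0 < r * KK m)%N.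
Proof. by rewrite muln_gt0 hr /KK addnS. Qed.

Lemma xx_gt0 : 0 < xx.
Proof. by rewrite invr_gt0 mulr_gt0 // ltr0n. Qed.

Lemma yy_gt0 m : 0 < yy m.
Proof. by rewrite invr_gt0 mulr_gt0 // ltr0n rK_gt0. Qed.

Lemma yy_le_xx m : yy m <= xx.
Proof.
rewrite /yy /xx lef_pV2 ?posrE ?mulr_gt0 ?ltr0n ?rK_gt0 //.
rewrite ler_pM2l // ler_nat.
apply: (@leq_trans (KK m)); first by rewrite /KK leq_addl.
by rewrite leq_pmull.
Qed.

Lemma xx_le1 : xx <= 1.
Proof.
have h : 1 <= 2 * (s.+1)%:R :> R.
  by rewrite -natrM ler1n muln_gt0.
rewrite /xx invf_le1 //; apply: lt_le_trans h; exact: ltr01.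
Qed.

Lemma sxx : s%:R * xx <= 2^-1.
Proof.
have h1 : xx * (2 * (s.+1)%:R) = 1 by rewrite mulVf // mulf_neq0 // pnatr_eq0.
have h0 := xx_gt0.
rewrite -addn1 natrD in h1.
nra.
Qed.

Lemma ryy m : (r * KK m)%:R * yy m = 2^-1.
Proof.
rewrite /yy invfM mulrCA mulfV ?mulr1 //.
by rewrite pnatr_eq0 -lt0n rK_gt0.
Qed.

Lemma pp_nb : nabla_bar pp.
Proof.
have x0 := xx_gt0.
split; [|split].
- move=> k; rewrite /pp; case: ifP => h1; case: ifP => h2 //; try lra.
  by move: h2; rewrite (ltnW h1).
- by move=> k; rewrite /pp; case: ifP => _ //; exact: ltW.
- move=> N.
  have f0 : forall k, 0 <= pp k by move=> k; rewrite /pp; case: ifP => _ //; exact: ltW.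
  have fT : forall k, (s <= k)%N -> pp k = 0 by move=> k sk; rewrite /pp ltnNge sk.
  apply: (le_trans (@sum_trunc _ _ _ N f0 fT)).
  rewrite (eq_bigr (fun=> xx)); last by move=> k _; rewrite /pp ltn_ord.
  rewrite sumr_const card_ord -mulr_natl; have := sxx; lra.
Qed.

Lemma qq_nb m : nabla_bar (qq m).
Proof.
have x0 := xx_gt0; have y0 := yy_gt0 m; have yx := yy_le_xx m.
split; [|split].
- move=> k; rewrite /qq.
  case: ifP => h1; first by rewrite (ltnW h1).
  case: ifP => h2.
    have h3 : (k < s + r * KK m)%N by apply: ltn_trans h2.
    by rewrite h3; case: ifP => _; lra.
  by case: ifP => _; [lra | case: ifP => _; lra].
- by move=> k; rewrite /qq; case: ifP => _; [exact: ltW | case: ifP => _ //; exact: ltW].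
- move=> N.
  have f0 : forall k, 0 <= qq m k.
    by move=> k; rewrite /qq; case: ifP => _; [exact: ltW | case: ifP => _ //; exact: ltW].
  have fT : forall k, (s + r * KK m <= k)%N -> qq m k = 0.
    move=> k sk; rewrite /qq ltnNge (leq_trans _ sk) ?leq_addr //.
    by rewrite ltnNge sk.
  apply: (le_trans (@sum_trunc _ _ _ N f0 fT)).
  rewrite -(big_mkord xpredT) (big_cat_nat (leq0n s) (leq_addr _ _)) /=.
  rewrite (eq_big_nat _ _ (F2 := fun=> xx)); last by move=> k /andP [_ h]; rewrite /qq h.
  rewrite [X in _ + X](eq_big_nat _ _ (F2 := fun=> yy m)); last first.
    by move=> k /andP [h1 h2]; rewrite /qq ltnNge h1 /= h2.
  rewrite !sumr_const_nat subn0 addKn -[xx *+ _]mulr_natl -[yy m *+ _]mulr_natl ryy.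
  have := sxx; lra.
Qed.

Lemma term_pp0 l : families a l -> term a pp l = 0.
Proof.
move=> [sl [ul _]].
have : ~~ all (fun x => x < s)%N l.
  apply/negP => /allP al.
  have hsub : {subset l <= iota 0 s}.
    by move=> x xl; rewrite mem_iota /= add0n; exact: al x xl.
  have := uniq_leq_size ul hsub; rewrite size_iota sl -hrs => h.
  by move: h hr; rewrite -{2}[s]add0n leq_add2r leqn0 => /eqP ->.
case/allPn => x xl; rewrite -leqNgt => hx.
have hk : (index x l < size l)%N by rewrite index_mem.
rewrite /term (bigD1 (Ordinal hk)) //= nth_index // /pp ltnNge hx /= expr0n.
have : (0 < nth 0%N E (index x l))%N.
  by apply: expo_pos; apply: mem_nth; rewrite -sl.
by case: (nth 0%N E _) => // e _; rewrite /= mul0r.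
Qed.

Lemma En_pp0 : En a pp = 0.
Proof.
have h : forall M, G a M pp = 0.
  by move=> M; rewrite /G big1 // => l /asboolP hl; exact: term_pp0.
apply/eqP; rewrite eq_le; apply/andP; split.
  by apply: (En_ub _ pp_nb) => M; rewrite h.
rewrite -(h 0%N); exact: (En_lb 0 pp_nb).
Qed.

Lemma F_pp0 : @F n a R pp = 0.
Proof.
have -> : @F n a R pp = Ccoef a R * En a pp by [].
by rewrite En_pp0 mulr0.
Qed.

Lemma ltl_fam m (t : {ffun 'I_r -> 'I_(KK m)}) : families a (ltl r s (KK m) t).
Proof.
split; first by rewrite size_ltl hrs.
split; first exact: ltl_uniq.
move=> k; rewrite size_ltl => hk1 he.
case: (ltnP k.+1 r) => h1.
  rewrite (@nth_ltl1 r s (KK m) t k (ltnW h1)) (@nth_ltl1 r s (KK m) t k.+1 h1).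
  by apply: g_mono; exact: ltnSn.
case: (ltnP k r) => h2.
  exfalso; move: he; rewrite HE1 // => he.
  by have := HE2 k.+1 h1 (leq_trans hk1 (eq_leq hrs)); rewrite -he.
rewrite !nth_ltl2 // ?subSn // ?(leqW h2) //; exact: ltnW.
Qed.

Lemma ltl_LS m (t : {ffun 'I_r -> 'I_(KK m)}) :
  ltl r s (KK m) t \in LS L (s + r * KK m).
Proof.
rewrite mem_LS size_ltl hrs eqxx /=.
apply/allP => x; rewrite mem_cat => /orP [/mapP [i _ ->] | ].
  by have /andP [_ h] := g_bound' r s (KK m) t i; exact: ltnW.
rewrite mem_iota add0n => /andP [_ h]; exact: leq_trans (ltnW h) (leq_addr _ _).
Qed.

Lemma term_ltl m (t : {ffun 'I_r -> 'I_(KK m)}) :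
  yy m ^+ r * (xx ^+ n) ^+ s <= term a (qq m) (ltl r s (KK m) t).
Proof.
have x0 := xx_gt0; have x1 := xx_le1; have y0 := yy_gt0 m.
rewrite /term -(big_mkord xpredT (fun k => qq m (nth 0%N (ltl r s (KK m) t) k) ^+ nth 0%N E k)) size_ltl.
rewrite (big_cat_nat (leq0n r) (leq_addr s r)) /=.
rewrite (eq_big_nat _ _ (F2 := fun=> yy m)); last first.
  move=> k /andP [_ hk]; rewrite (@nth_ltl1 r s (KK m) t _ hk) HE1 // expr1 /qq.
  by case/andP: (g_bound' r s (KK m) t (Ordinal hk)) => h1 h2; rewrite ltnNge h1 /= h2.
rewrite prodr_const_nat subn0; apply: ler_wpM2l; first exact/exprn_ge0/ltW.
rewrite (eq_big_nat _ _ (F2 := fun k => xx ^+ nth 0%N E k)); last first.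
  move=> k /andP [h1 h2]; rewrite nth_ltl2 // /qq.
  by have -> : (k - r < s)%N by rewrite ltn_subLR.
have -> : (xx ^+ n) ^+ s = \prod_(r <= k < r + s) xx ^+ n by rewrite prodr_const_nat addKn.
rewrite big_seq_cond [X in _ <= X]big_seq_cond; apply: ler_prod => k.
rewrite andbT mem_index_iota => /andP [h1 h2].
rewrite exprn_ge0 /=; last exact: ltW.
apply: (ler_wiXn2l (ltW x0) x1).
by apply: expo_le; apply: mem_nth; rewrite -hrs.
Qed.

Lemma Kyy m : (KK m)%:R * yy m = (2 * r%:R)^-1.
Proof.
rewrite /yy natrM !invfM mulrC -!mulrA mulVf ?mulr1 //.
by rewrite pnatr_eq0 /KK addnS.
Qed.

Lemma ltl_inj m : injective (ltl r s (KK m)).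
Proof.
move=> t1 t2 e; apply/ffunP => i; apply: val_inj.
have E1 : forall t : {ffun 'I_r -> 'I_(KK m)}, nth 0%N (ltl r s (KK m) t) i = (s + i * KK m + t i)%N.
  by move=> t; rewrite (@nth_ltl1 r s (KK m) t _ (ltn_ord i)); congr (_ + val (t _))%N; apply: val_inj.
by have := E1 t1; rewrite e E1 => /addnI.
Qed.

Definition c0 : R := ((2 * r%:R)^-1) ^+ r * (xx ^+ n) ^+ s.

Lemma G_qq_lb m : c0 <= G a (s + r * KK m) (qq m).
Proof.
have x0 := xx_gt0; have y0 := yy_gt0 m.
apply: (@le_trans _ _ (\sum_(t : {ffun 'I_r -> 'I_(KK m)}) term a (qq m) (ltl r s (KK m) t))).
  apply: (@le_trans _ _ (\sum_(t : {ffun 'I_r -> 'I_(KK m)}) yy m ^+ r * (xx ^+ n) ^+ s)).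
    rewrite sumr_const card_ffun !card_ord -mulr_natl natrX mulrA -exprMn Kyy.
    exact: le_refl.
  by apply: ler_sum => t _; exact: term_ltl.
have -> : \sum_(t : {ffun 'I_r -> 'I_(KK m)}) term a (qq m) (ltl r s (KK m) t) =
    \sum_(l <- [seq ltl r s (KK m) t | t <- enum {ffun 'I_r -> 'I_(KK m)}]) term a (qq m) l.
  by rewrite big_map big_enum.
rewrite /G -[X in _ <= X]big_filter; apply: sum_sub.
- rewrite map_inj_uniq ?enum_uniq //; exact: ltl_inj.
- exact/filter_uniq/LS_uniq.
- move=> l /mapP [t _ ->]; rewrite mem_filter ltl_LS andbT.
  by apply/asboolP; exact: ltl_fam.
- by move=> l _; exact: (term_ge0 (qq_nb m)).
Qed.

Lemma c0_gt0 : 0 < c0.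
Proof.
rewrite /c0; apply: mulr_gt0; apply: exprn_gt0.
  by rewrite invr_gt0 mulr_gt0 // ltr0n.
by apply: exprn_gt0; exact: xx_gt0.
Qed.

Lemma Ccoef_gt0 : 0 < Ccoef a R.
Proof.
rewrite /Ccoef divr_gt0 // ltr0n ?fact_gt0 //.
by rewrite prodn_gt0 // => i; rewrite muln_gt0 expn_gt0 !fact_gt0.
Qed.

Lemma F_qq_lb m : Ccoef a R * c0 <= @F n a R (qq m).
Proof.
have -> : @F n a R (qq m) = Ccoef a R * En a (qq m) by [].
apply: ler_wpM2l; first exact/ltW/Ccoef_gt0.
apply: le_trans (G_qq_lb m) _; exact: (En_lb _ (qq_nb m)).
Qed.

Lemma qq_cvg : {ptws, (qq : nat -> {ptws nat -> R}) @ \oo --> (pp : {ptws nat -> R})}.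
Proof.
apply/pointwise_cvgP => k.
suff H : (fun m => qq m k) @ \oo --> pp k by exact: H.
case: (ltnP k s) => hk.
  rewrite /pp hk; apply/cvgrPdist_lt => e e0; apply: nearW => m /=.
  by rewrite /qq hk subrr normr0.
rewrite /pp ltnNge hk /=; apply/cvgrPdist_lt => e e0.
pose N0 := Num.Def.archi_bound e^-1.
have hN0 : e^-1 < N0%:R by apply: archi_boundP; rewrite invr_ge0 ltW.
apply: filterS (nbhs_infty_ge N0) => m hm /=.
rewrite /qq ltnNge hk /= sub0r normrN.
case: ifP => _; last by rewrite normr0.
rewrite ger0_norm; last exact/ltW/yy_gt0.
have hX : N0%:R <= (2 * (r * KK m)%:R : R).
  rewrite -natrM ler_nat; apply: (leq_trans hm); apply: (@leq_trans (KK m)).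
    by rewrite /KK leq_addr.
  by apply: (@leq_trans (r * KK m)); [rewrite leq_pmull | rewrite leq_pmull].
have h1 : yy m * (2 * (r * KK m)%:R) = 1.
  by rewrite /yy mulVf // mulf_neq0 // pnatr_eq0 -lt0n rK_gt0.
have hXe : e^-1 < (2 * (r * KK m)%:R : R) by apply: lt_le_trans hN0 hX.
have eX : 1 < e * (2 * (r * KK m)%:R : R).
  by rewrite -[X in X < _](mulfV (lt0r_neq0 e0)) ltr_pM2l.
have X0 : 0 < (2 * (r * KK m)%:R : R) by rewrite mulr_gt0 // ltr0n rK_gt0.
have y0 := yy_gt0 m.
move: (yy m) (2 * (r * KK m)%:R : R) h1 eX X0 y0 => y X h1' eX' X0' y0'.
nra.
Qed.

Lemma fwd_contra : ~ {within (@nabla_bar R : set {ptws nat -> R}), continuous (@F n a R)}.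
Proof.
move=> hc; move/subspace_continuousP: hc => /(_ pp pp_nb) hc.
have hq : (qq : nat -> {ptws nat -> R}) @ \oo --> within (@nabla_bar R : set {ptws nat -> R}) (nbhs (pp : {ptws nat -> R})).
  move=> W hW; have := @qq_cvg (fun x => nabla_bar x -> W x) hW.
  have hsub : (fun i => nabla_bar (qq i) -> W (qq i)) `<=` (fun i => W (qq i)) by move=> i hi; exact: hi (qq_nb i).
  move=> h; exact: (filterS hsub h).
have h : (fun m => @F n a R (qq m)) @ \oo --> @F n a R pp.
  apply: cvg_comp; first exact: hq. exact: hc.
rewrite F_pp0 in h.
have cpos : 0 < Ccoef a R * c0 by rewrite mulr_gt0 ?Ccoef_gt0 ?c0_gt0.
move/cvgrPdist_lt: h => /(_ _ cpos) /filter_ex [m] /=.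
rewrite sub0r normrN ger0_norm; last first.
  exact: le_trans (ltW cpos) (F_qq_lb m).
by rewrite ltNge F_qq_lb.
Qed.

End Fwd.

Theorem lemma3p1 (R : realType) (n : nat) (hn : (1 <= n)%N)
  (a : 'I_n -> nat) (ha : in_An a) :
  {within (@nabla_bar R : set {ptws nat -> R}), continuous (@F n a R)}
  <-> a (Ordinal hn) = 0%N.
Proof.
split.
- move=> hc; apply/eqP/negPn/negP => hr0.
  have [rest [eE hrest]] := expo_split _ hn a.
  have hr : (0 < a (Ordinal hn))%N by rewrite lt0n.
  apply: (@fwd_contra R n a (a (Ordinal hn)) (size rest) hr _ _ _ hc).
  + by rewrite eE size_cat size_nseq.
  + by move=> k hk; rewrite eE nth_cat size_nseq hk nth_nseq hk.
  + move=> k h1 h2; rewrite eE nth_cat size_nseq (ltnNge k) h1 /=; apply: hrest; apply: mem_nth.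
    by move: h2; rewrite eE size_cat size_nseq ltn_subLR.
- by move=> a0; apply: back_dir; exact: expo_ge2 a0.
Qed.
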